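(* Let $a>b\geq1$ be coprime integers, $p=a/b$, $\hat n\geq 1$ an integer, $N=(2^b+2)\hat n+2^{a-b}+2^b$. Define $g_0=\mathbf{1}_{(2^b+1)\hat n}\circ\mathbf{0}_{\hat n}\circ\mathbf{0}_{2^{a-b}}\circ\mathbf{1}_{2^b}$ and, for $i\in[2^{a-b}]$, $g_i=\mathbf{0}_{(2^b+2)\hat n}\circ\mathbf{0}_{i-1}\circ 1\circ\mathbf{0}_{2^{a-b}+2^b-i}$, all of length $N$. Then for every $s^*\in\{0,1\}^N$, $\sum_{i=0}^{2^{a-b}} d(s^*,g_i)^p\geq(2^a+2^{a-b})(\hat n+1)^p$.
   Context: $d$ denotes Hamming distance; $\mathbf{0}_\ell,\mathbf{1}_\ell$ are the all-zero/all-one strings of length $\ell$; $\circ$ is concatenation; $[t]=\{1,\dots,t\}$. *)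

(* Defs.v *)
From Stdlib Require Import Reals Lra Lia Arith List.
Open Scope R_scope.

Fixpoint hamming (s t : list bool) : nat :=
  match s, t with
  | x :: s', y :: t' => ((if Bool.eqb x y then 0 else 1) + hamming s' t')%nat
  | _, _ => 0%nat
  end.

(* x^y for x >= 0, with the convention 0^y = 0 (y > 0 here). *)
Definition rpow (x y : R) : R :=
  if Req_EM_T x 0 then 0 else Rpower x y.

Definition zeros (l : nat) : list bool := repeat false l.
Definition ones (l : nat) : list bool := repeat true l.

Definition gstr (a b nh i : nat) : list bool :=
  match i with
  | O => ones ((2 ^ b + 1) * nh) ++ zeros nh ++ zeros (2 ^ (a - b)) ++ ones (2 ^ b)
  | S _ => zeros ((2 ^ b + 2) * nh) ++ zeros (i - 1) ++ (true :: nil)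
           ++ zeros (2 ^ (a - b) + 2 ^ b - i)
  end.

(* Main.v *)
Require Import Defs.
From Stdlib Require Import Reals Lra Lia Arith List.
Open Scope R_scope.

Lemma tangent (p y x : R) : 1 <= p -> 0 < y -> 0 <= x ->
  rpow x p >= Rpower y p + p * Rpower y (p-1) * (x - y).
Proof.
  intros hp hy hx.
  assert (Hyp : Rpower y p = Rpower y (p-1) * y).
  { replace p with ((p-1)+1) at 1 by ring. rewrite Rpower_plus, Rpower_1; auto. }
  assert (Hpos : 0 < Rpower y (p-1)) by (unfold Rpower; apply exp_pos).
  unfold rpow. destruct (Req_EM_T x 0) as [e|ne].
  - subst x. rewrite Hyp. assert (0 <= (p-1)*(Rpower y (p-1)*y)) by (apply Rmult_le_pos; nra). nra.
  - assert (hx' : 0 < x) by lra.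
    set (phi := fun z => Rpower z p - p * Rpower y (p-1) * z).
    set (phi' := fun z => p * Rpower z (p-1) - p * Rpower y (p-1)).
    assert (D : forall c, 0 < c -> derivable_pt_lim phi c (phi' c)).
    { intros c hc. unfold phi, phi'.
      apply derivable_pt_lim_minus.
      - apply derivable_pt_lim_power; auto.
      - replace (p * Rpower y (p - 1)) with (p * Rpower y (p - 1) * 1) at 2 by ring.
        apply derivable_pt_lim_scal. apply derivable_pt_lim_id. }
    assert (phi x >= phi y).
    { destruct (Rtotal_order x y) as [lt|[eq|gt]].
      - destruct (MVT_cor2 phi phi' x y lt) as [c [E hc]].
        { intros c hc. apply D. lra. }
        assert (Rpower c (p-1) <= Rpower y (p-1)) by (apply Rle_Rpower_l; lra).
        assert (phi' c <= 0) by (unfold phi'; nra).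
        assert (0 <= - phi' c * (y - x)) by (apply Rmult_le_pos; lra). lra.
      - subst; lra.
      - destruct (MVT_cor2 phi phi' y x gt) as [c [E hc]].
        { intros c hc. apply D. lra. }
        assert (Rpower y (p-1) <= Rpower c (p-1)) by (apply Rle_Rpower_l; lra).
        assert (0 <= phi' c) by (unfold phi'; nra).
        assert (0 <= phi' c * (x - y)) by (apply Rmult_le_pos; lra). lra. }
    unfold phi in H. rewrite Hyp in *. nra.
Qed.

Lemma ham_sym x y : hamming x y = hamming y x.
Proof. revert y; induction x as [|a x IH]; intros [|b y]; simpl; auto.
  rewrite IH. destruct a, b; reflexivity. Qed.

Lemma ham_tri x y z : length x = length y -> length y = length z ->
  (hamming x z <= hamming x y + hamming y z)%nat.
Proof. revert y z; induction x as [|a x IH]; intros [|b y] [|c z]; simpl; intros H1 H2;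
  try lia. specialize (IH y z ltac:(lia) ltac:(lia)). destruct a, b, c; simpl; lia. Qed.

Lemma ham_app x1 x2 y1 y2 : length x1 = length y1 ->
  hamming (x1 ++ x2) (y1 ++ y2) = (hamming x1 y1 + hamming x2 y2)%nat.
Proof. revert y1; induction x1 as [|a x IH]; intros [|b y]; simpl; intros H; try lia.
  rewrite IH; lia. Qed.

Lemma ham_oz l : hamming (ones l) (zeros l) = l.
Proof. unfold ones, zeros; induction l; simpl; lia. Qed.
Lemma ham_zz l : hamming (zeros l) (zeros l) = 0%nat.
Proof. unfold ones, zeros; induction l; simpl; lia. Qed.

Lemma ham_g0gi a b nh i : (1 <= i <= 2 ^ (a - b))%nat ->
  hamming (gstr a b nh 0) (gstr a b nh i) = ((2^b+1)*nh + 2^b + 1)%nat.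
Proof.
  intros hi. destruct i as [|i]; [lia|]. unfold gstr.
  replace ((2 ^ b + 2) * nh)%nat with ((2^b+1)*nh + nh)%nat by lia.
  replace (S i - 1)%nat with i by lia.
  replace (2 ^ (a - b) + 2 ^ b - S i)%nat with ((2^(a-b) - S i) + 2^b)%nat by lia.
  unfold zeros at 3 4 5. rewrite !repeat_app. fold zeros.
  rewrite <- !app_assoc.
  rewrite ham_app by (unfold ones, zeros; rewrite !repeat_length; lia).
  rewrite ham_oz.
  rewrite ham_app by (unfold ones, zeros; rewrite !repeat_length; lia).
  rewrite ham_zz.
  replace (zeros (2 ^ (a - b))) with (zeros i ++ zeros 1 ++ zeros (2^(a-b) - S i))
    by (unfold zeros; rewrite <- !repeat_app; f_equal; lia).
  rewrite <- !app_assoc.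
  rewrite ham_app by (unfold ones, zeros; rewrite !repeat_length; lia).
  rewrite ham_zz. simpl.
  rewrite ham_app by (unfold ones, zeros; rewrite !repeat_length; lia).
  rewrite ham_zz, ham_oz. lia.
Qed.

Lemma len_g a b nh i : (i <= 2 ^ (a - b))%nat ->
  length (gstr a b nh i) = ((2 ^ b + 2) * nh + 2 ^ (a - b) + 2 ^ b)%nat.
Proof. intros. destruct i; unfold gstr, ones, zeros; rewrite !length_app; simpl;
  rewrite ?length_app, !repeat_length; simpl; try rewrite repeat_length; lia. Qed.

Lemma Rpow2b (a b : nat) (e : R) : Rpower (2 ^ b) e = Rpower 2 (INR b * e).
Proof. rewrite <- Rpower_pow by lra. apply Rpower_mult. Qed.

Theorem claim2 (a b nh : nat) (hab : (b < a)%nat) (hb : (1 <= b)%nat)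
  (hcop : Nat.gcd a b = 1%nat) (hn : (1 <= nh)%nat)
  (s : list bool)
  (hs : length s = ((2 ^ b + 2) * nh + 2 ^ (a - b) + 2 ^ b)%nat) :
  let p := INR a / INR b in
  sum_f_R0 (fun i => rpow (INR (hamming s (gstr a b nh i))) p) (2 ^ (a - b))
    >= (2 ^ a + 2 ^ (a - b)) * rpow (INR nh + 1) p.
Proof.
  intros p.
  assert (hbR : 0 < INR b) by (apply lt_0_INR; lia).
  assert (habR : INR b < INR a) by (apply lt_INR; lia).
  assert (hp : 1 <= p).
  { unfold p. apply (Rmult_le_reg_r (INR b)); auto. field_simplify; lra. }
  assert (hnR : 0 <= INR nh) by apply pos_INR.
  set (y1 := INR nh + 1).
  set (y0 := 2 ^ b * y1).
  assert (hy1 : 0 < y1) by (unfold y1; lra).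
  assert (h2b : 0 < 2 ^ b) by (apply pow_lt; lra).
  assert (hy0 : 0 < y0) by (unfold y0; apply Rmult_lt_0_compat; lra).
  assert (Ha : Rpower (2 ^ b) p = 2 ^ a).
  { rewrite Rpow2b by exact a. unfold p.
    replace (INR b * (INR a / INR b)) with (INR a) by (field; lra).
    apply Rpower_pow; lra. }
  assert (Hab : Rpower (2 ^ b) (p - 1) = 2 ^ (a - b)).
  { rewrite Rpow2b by exact a. unfold p.
    replace (INR b * (INR a / INR b - 1)) with (INR (a - b)) by
      (rewrite minus_INR by lia; field; lra).
    apply Rpower_pow; lra. }
  assert (Hy0p : Rpower y0 p = 2 ^ a * Rpower y1 p).
  { unfold y0. rewrite <- Rpower_mult_distr by lra. rewrite Ha; ring. }
  assert (Hy0q : Rpower y0 (p-1) = 2 ^ (a-b) * Rpower y1 (p-1)).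
  { unfold y0. rewrite <- Rpower_mult_distr by lra. rewrite Hab; ring. }
  assert (Hr : rpow y1 p = Rpower y1 p).
  { unfold rpow. destruct (Req_EM_T y1 0); [lra|reflexivity]. }
  rewrite Hr.
  set (F := fun i => rpow (INR (hamming s (gstr a b nh i))) p).
  set (d0 := INR (hamming s (gstr a b nh 0))).
  set (Q := p * Rpower y1 (p - 1)).
  assert (hQ : 0 <= Q).
  { unfold Q. apply Rmult_le_pos; [lra|]. unfold Rpower; left; apply exp_pos. }
  assert (F0 : F 0%nat >= 2 ^ a * Rpower y1 p + 2 ^ (a-b) * Q * (d0 - y0)).
  { unfold F. pose proof (tangent p y0 d0 hp hy0 (pos_INR _)) as T.
    fold d0. rewrite Hy0p, Hy0q in T. unfold Q. lra. }
  assert (Fi : forall i, (1 <= i <= 2 ^ (a - b))%nat ->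
                 F i >= Rpower y1 p + Q * (y0 - d0)).
  { intros i hi. unfold F.
    pose proof (tangent p y1 _ hp hy1 (pos_INR (hamming s (gstr a b nh i)))) as T.
    assert (HD : (((2^b+1)*nh + 2^b + 1) <= hamming s (gstr a b nh 0) + hamming s (gstr a b nh i))%nat).
    { rewrite <- (ham_g0gi a b nh i hi).
      rewrite (ham_sym s (gstr a b nh 0)).
      apply ham_tri; rewrite ?len_g, ?hs; try lia; rewrite len_g; lia. }
    apply le_INR in HD. rewrite !plus_INR, mult_INR, plus_INR, pow_INR in HD.
    replace (INR 2) with 2 in HD by (simpl; ring). simpl (INR 1) in HD. fold d0 in HD.
    assert (E : y0 - d0 <= INR (hamming s (gstr a b nh i)) - y1) by (unfold y0, y1 in *; nra).
    fold Q in T. assert (Q * (y0 - d0) <= Q * (INR (hamming s (gstr a b nh i)) - y1))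
      by (apply Rmult_le_compat_l; lra).
    unfold Q in *. lra. }
  assert (Ind : forall N, (N <= 2 ^ (a - b))%nat ->
     sum_f_R0 F N >= F 0%nat + INR N * (Rpower y1 p + Q * (y0 - d0))).
  { induction N as [|N IH]; intros hN.
    - simpl. lra.
    - rewrite tech5. specialize (Fi (S N) ltac:(lia)). specialize (IH ltac:(lia)).
      rewrite S_INR. lra. }
  specialize (Ind _ (Nat.le_refl _)). fold F. rewrite pow_INR in Ind. replace (INR 2) with 2 in Ind by (simpl; ring).
  assert (E : 2 ^ (a - b) * Q * (d0 - y0) + 2 ^ (a - b) * (Q * (y0 - d0)) = 0) by ring.
  lra.
Qed.
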